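(* Let $G=(V,E)$ be a finite simple graph (not necessarily claw-free) whose modular decomposition tree $T(G)$ has one of the following forms: (a) the root is prime and every child of the root is a leaf or a serial node; (b) the root is serial and each child is a leaf, a parallel node with two children, or a prime node, the children of the latter two being leaves or serial nodes; (c) the root is parallel and each child is a leaf or the root of a subtree of form (a) or (b). Then: (1) if $A$ is a prime node of $T(G)$ with maximal modular partition $P$ of its vertex set $V(A)$, and $\{\tilde x_0,\dots,\tilde x_3\}$ is a claw in $G[V(A)]/P$, then $\{x_0,\dots,x_3\}$ is a claw in $G$ for arbitrary representatives $x_i\in\tilde x_i$; (2) if $A$ is a prime node with partition $P$ that is a child of a serial node $B$, and $\{\tilde x_1,\tilde x_2,\tilde x_3\}$ is an independent set of $G[V(A)]/P$, then $\{x_0,\dots,x_3\}$ is a claw in $G$ for arbitrary representatives $x_i\in\tilde x_i$ and every vertex $x_0$ in the vertex set of another child of $B$. Moreover, every claw of $G$ arises in exactly one of the ways (1) or (2).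
   Context: A claw is an induced subgraph isomorphic to $K_{1,3}$. A module of $G$ is a set $M\subseteq V$ such that every vertex outside $M$ is adjacent either to all or none of $M$. A graph is prime if it has at least 4 vertices and only the modules $\emptyset$, singletons and the whole vertex set. Modular decomposition (Gallai): exactly one holds: (single) $G$ is one vertex; (parallel) $G$ is disconnected; (serial) the complement of $G$ is disconnected; (prime) $G$ and its complement are connected, $|V|\ge4$, and the maximal proper modules partition $V$ into $P$ (the maximal modular partition) with $G/P$ prime. The tree $T(G)$: single case a leaf labelled by the vertex; parallel case a root labelled ''parallel'' with children $T(G[C])$ for components $C$; serial case a root labelled ''serial'' with children $T(G[C])$ for components $C$ of the complement; prime case a root labelled ''prime'' with children $T(G[M])$, $M\in P$. Each node $A$ has an associated vertex set $V(A)$. For a partition $P$ of a vertex set into modules, the quotient graph has vertex set $P$, with $X,Y$ adjacent iff every vertex of $X$ is adjacent to every vertex of $Y$; $\tilde x$ denotes the part containing $x$. *)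

(* Defs.v *)
(* Finite simple graphs as symmetric irreflexive relations on a finType. *)
From mathcomp Require Import all_boot.
Set Implicit Arguments. Unset Strict Implicit. Unset Printing Implicit Defensive.

Section ModDecomp.
Variables (T : finType) (e : rel T).

Definition restr (S : {set T}) : rel T := fun a b => [&& a \in S, b \in S & e a b].
Definition coe : rel T := fun a b => (a != b) && ~~ e a b.

Definition connectedb (r : rel T) (S : {set T}) : bool :=
  [forall x in S, forall y in S, connect (fun a b => [&& a \in S, b \in S & r a b]) x y].
Definition components (r : rel T) (S : {set T}) : {set {set T}} :=
  [set [set y in S | connect (fun a b => [&& a \in S, b \in S & r a b]) x y] | x in S].

Definition is_module (S M : {set T}) : bool :=
  (M \subset S) &&
  [forall v in S :\: M, [forall m in M, e v m] || [forall m in M, ~~ e v m]].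
Definition max_proper_module (S M : {set T}) : bool :=
  [&& is_module S M, M != S &
      [forall M' : {set T}, (is_module S M' && (M \proper M')) ==> (M' == S)]].

Inductive kind := Single | Parallel | Serial | Prime.

Definition node_kind (S : {set T}) : kind :=
  if #|S| == 1 then Single
  else if ~~ connectedb e S then Parallel
  else if ~~ connectedb coe S then Serial
  else Prime.

Definition children (S : {set T}) : {set {set T}} :=
  match node_kind S with
  | Single => set0
  | Parallel => components e S
  | Serial => components coe S
  | Prime => [set M | max_proper_module S M]
  end.

(* the nodes of T(G), identified with their vertex sets V(A) *)
Inductive is_node : {set T} -> Prop :=
  | node_root : is_node [set: T]
  | node_child S C : is_node S -> C \in children S -> is_node C.

Definition qadj : rel {set T} :=
  fun X Y => (X != Y) && [forall x in X, forall y in Y, e x y].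

Definition clawb (U : eqType) (r : rel U) (x0 x1 x2 x3 : U) : bool :=
  [&& r x0 x1, r x0 x2, r x0 x3, ~~ r x1 x2, ~~ r x1 x3, ~~ r x2 x3 &
      uniq [:: x1; x2; x3]].

Definition leaf_or_serial (S : {set T}) : Prop :=
  node_kind S = Single \/
  (node_kind S = Serial /\ forall D, D \in children S -> node_kind D = Single).

Definition form_a (S : {set T}) : Prop :=
  node_kind S = Prime /\ forall C, C \in children S -> leaf_or_serial C.

Definition form_b (S : {set T}) : Prop :=
  node_kind S = Serial /\
  forall C, C \in children S ->
    node_kind C = Single \/
    (node_kind C = Parallel /\ #|children C| = 2 /\
       forall D, D \in children C -> leaf_or_serial D) \/
    (node_kind C = Prime /\ forall D, D \in children C -> leaf_or_serial D).

Definition form_c (S : {set T}) : Prop :=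
  node_kind S = Parallel /\
  forall C, C \in children S -> node_kind C = Single \/ form_a C \/ form_b C.

Definition way1 (x0 x1 x2 x3 : T) : Prop :=
  exists A, exists X0 X1 X2 X3,
    [/\ is_node A, node_kind A = Prime,
        [/\ X0 \in children A, X1 \in children A, X2 \in children A & X3 \in children A],
        clawb qadj X0 X1 X2 X3 &
        [/\ x0 \in X0, x1 \in X1, x2 \in X2 & x3 \in X3]].

Definition way2 (x0 x1 x2 x3 : T) : Prop :=
  exists B A C, exists X1 X2 X3,
    [/\ [/\ is_node B, node_kind B = Serial, A \in children B & node_kind A = Prime],
        [/\ X1 \in children A, X2 \in children A & X3 \in children A],
        [&& ~~ qadj X1 X2, ~~ qadj X1 X3, ~~ qadj X2 X3 & uniq [:: X1; X2; X3]],
        [/\ x1 \in X1, x2 \in X2 & x3 \in X3] &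
        [/\ C \in children B, C != A & x0 \in C]].

End ModDecomp.

(* Main.v *)
Require Import Defs.
From mathcomp Require Import all_boot.
Set Implicit Arguments. Unset Strict Implicit. Unset Printing Implicit Defensive.

Section Proof.
Variables (T : finType) (e : rel T).
Hypothesis e_sym : symmetric e.
Hypothesis e_irr : irreflexive e.
Implicit Types (r : rel T) (S M C A B X Y D : {set T}) (x y a b v : T).

Definition rs (r : rel T) (S : {set T}) : rel T :=
  fun a b => [&& a \in S, b \in S & r a b].

Lemma kind_prime S : node_kind e S = Prime ->
  [/\ #|S| != 1, connectedb e S & connectedb (coe e) S].
Proof.
rewrite /node_kind; case: eqP => // _.
by case: (connectedb e S); case: (connectedb (coe e) S).
Qed.

Lemma kind_single S : node_kind e S = Single -> #|S| = 1.
Proof.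
rewrite /node_kind; case: eqP => // _.
by case: (connectedb e S); case: (connectedb (coe e) S).
Qed.

Lemma ch_kind S : children e S =
  match node_kind e S with
  | Single => set0
  | Parallel => components e S
  | Serial => components (coe e) S
  | Prime => [set M | max_proper_module e S M]
  end.
Proof. by []. Qed.

Lemma coe_sym : symmetric (coe e).
Proof. by move=> a b; rewrite /coe eq_sym e_sym. Qed.

Lemma rs_sym r S : symmetric r -> symmetric (rs r S).
Proof. by move=> rsym a b; rewrite /rs rsym andbCA. Qed.

Lemma comp_mem r S C : C \in components r S ->
  exists2 c, c \in S & C = [set y in S | connect (rs r S) c y].
Proof. by case/imsetP => c cS ->; exists c. Qed.

Lemma comp_sub r S C : C \in components r S -> C \subset S.
Proof.
by case/comp_mem => c cS ->; apply/subsetP => y; rewrite inE => /andP[].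
Qed.

Lemma comp_cover r S x : x \in S ->
  exists2 C, C \in components r S & x \in C.
Proof.
move=> xS; exists [set y in S | connect (rs r S) x y].
  by apply/imsetP; exists x.
by rewrite inE xS connect0.
Qed.

Lemma comp_same r S C x y : C \in components r S -> x \in C -> y \in S ->
  connect (rs r S) x y -> y \in C.
Proof.
case/comp_mem => c cS -> ; rewrite !inE => /andP[xS cx] yS xy.
by rewrite yS (connect_trans cx xy).
Qed.

Lemma comp_disj r S C1 C2 x : symmetric r ->
  C1 \in components r S -> C2 \in components r S -> x \in C1 -> x \in C2 -> C1 = C2.
Proof.
move=> rsym /comp_mem[c1 c1S ->] /comp_mem[c2 c2S ->].
have csym := sym_connect_sym (rs_sym S rsym).
rewrite !inE => /andP[xS c1x] /andP[_ c2x].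
apply/setP => y; rewrite !inE; case: (y \in S) => //=.
apply/idP/idP => H.
  by apply: (connect_trans c2x (connect_trans _ H)); rewrite csym.
by apply: (connect_trans c1x (connect_trans _ H)); rewrite csym.
Qed.

Lemma serial_adj S C1 C2 x y : C1 \in components (coe e) S ->
  C2 \in components (coe e) S -> C1 != C2 -> x \in C1 -> y \in C2 -> e x y.
Proof.
move=> h1 h2 ne xC yC; apply/negPn/negP => nxy.
have xS : x \in S := subsetP (comp_sub h1) x xC.
have yS : y \in S := subsetP (comp_sub h2) y yC.
case: (eqVneq x y) => [exy|nexy].
  by subst y; move/eqP: ne; apply; apply: comp_disj coe_sym h1 h2 xC yC.
have : y \in C1 by apply: (comp_same h1 xC yS); apply: connect1; rewrite /rs xS yS /coe nexy nxy.
by move=> yC1; move/eqP: ne; apply; apply: comp_disj coe_sym h1 h2 yC1 yC.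
Qed.

Lemma mod_uniform S M v a b : is_module e S M -> v \in S -> v \notin M ->
  a \in M -> b \in M -> e v a = e v b.
Proof.
case/andP => _ /forall_inP H vS vM aM bM.
have : v \in S :\: M by rewrite inE vM vS.
move/H; case/orP => /forall_inP H'.
  by rewrite !H'.
by rewrite (negbTE (H' a aM)) (negbTE (H' b bM)).
Qed.

Lemma conn_closed (r : rel T) S (M : {set T}) x y :
  (forall a b, a \in S -> b \in S -> r a b -> (a \in M) = (b \in M)) ->
  connect (rs r S) x y -> (x \in M) = (y \in M).
Proof.
move=> H /connectP [p]; elim: p x => [|z p IH] x /=; first by move=> _ ->.
case/andP => /and3P[xS zS rxz] pth lst.
by rewrite (H x z) //; apply: IH.
Qed.

Lemma not_conn (r : rel T) S (M : {set T}) x y :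
  x \in S -> y \in S -> x \in M -> y \notin M ->
  (forall a b, a \in S -> b \in S -> a \in M -> b \notin M -> ~~ r a b /\ ~~ r b a) ->
  ~~ connectedb r S.
Proof.
move=> xS yS xM yM H; apply/negP => /forall_inP/(_ x xS)/forall_inP/(_ y yS) C.
have: (x \in M) = (y \in M).
  apply: (conn_closed _ C) => a b aS bS rab.
  case aM: (a \in M); case bM: (b \in M) => //.
    by have [] := H a b aS bS aM (negbT bM); rewrite rab.
  by have [] := H b a bS aS bM (negbT aM); rewrite rab.
by rewrite xM (negbTE yM).
Qed.


Lemma max_pm S M M' : max_proper_module e S M -> is_module e S M' ->
  M \proper M' -> M' = S.
Proof.
case/and3P => _ _ /forallP H m pr; apply/eqP; move/implyP: (H M'); apply.
by rewrite m pr.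
Qed.

Lemma union_module S M1 M2 x : is_module e S M1 -> is_module e S M2 ->
  x \in M1 -> x \in M2 -> is_module e S (M1 :|: M2).
Proof.
move=> h1 h2 x1 x2; move/andP: (h1) => [s1 _]; move/andP: (h2) => [s2 _].
apply/andP; split; first by rewrite subUset s1 s2.
apply/forall_inP => v; rewrite !inE negb_or => /andP[/andP[vM1 vM2] vS].
case ev: (e v x); apply/orP; [left|right]; apply/forall_inP => m;
  rewrite inE => /orP[] mM.
- by rewrite (mod_uniform h1 vS vM1 mM x1) ev.
- by rewrite (mod_uniform h2 vS vM2 mM x2) ev.
- by rewrite (mod_uniform h1 vS vM1 mM x1) ev.
- by rewrite (mod_uniform h2 vS vM2 mM x2) ev.
Qed.

Lemma prime_disj S M1 M2 x : node_kind e S = Prime ->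
  max_proper_module e S M1 -> max_proper_module e S M2 ->
  x \in M1 -> x \in M2 -> M1 = M2.
Proof.
move=> /kind_prime[_ ce cc] p1 p2 x1 x2.
have m1 : is_module e S M1 by case/and3P: p1.
have m2 : is_module e S M2 by case/and3P: p2.
have n1 : M1 != S by case/and3P: p1.
have n2 : M2 != S by case/and3P: p2.
have s1 : M1 \subset S by case/andP: m1.
have s2 : M2 \subset S by case/andP: m2.
case: (boolP (M1 \subset M2)) => [sub12|nsub12].
  case: (eqVneq M1 M2) => // ne; exfalso.
  have : M1 \proper M2 by rewrite properEneq ne sub12.
  by move/(max_pm p1 m2) => E; rewrite E eqxx in n2.
case: (boolP (M2 \subset M1)) => [sub21|nsub21].
  case: (eqVneq M2 M1) => // ne; exfalso.
  have : M2 \proper M1 by rewrite properEneq ne sub21.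
  by move/(max_pm p2 m1) => E; rewrite E eqxx in n1.
exfalso.
case/subsetPn: nsub12 => a0 a0M1 a0M2.
case/subsetPn: nsub21 => b0 b0M2 b0M1.
have mU := union_module m1 m2 x1 x2.
have US : M1 :|: M2 = S.
  apply: (max_pm p1 mU); rewrite properE subsetUl /=.
  by apply/subsetPn; exists b0; rewrite ?inE ?b0M2 ?orbT.
have a0S : a0 \in S by apply: (subsetP s1).
have b0S : b0 \in S by apply: (subsetP s2).
have xS : x \in S by apply: (subsetP s1).
have key : forall b z, b \in S -> b \notin M1 -> z \in M1 -> e b z = e a0 x.
  move=> b z bS bM1 zM1.
  have bM2 : b \in M2 by move: bS; rewrite -US inE (negbTE bM1).
  rewrite (mod_uniform m1 bS bM1 zM1 a0M1) e_sym.
  exact: (mod_uniform m2 a0S a0M2 bM2 x2).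
case t: (e a0 x).
  move: cc; apply/negP.
  apply: (@not_conn (coe e) S M1 x b0) => // a b aS bS aM bM.
  have h := key b a bS bM aM.
  by rewrite /coe [e a b]e_sym h t !andbF.
move: ce; apply/negP.
apply: (@not_conn e S M1 x b0) => // a b aS bS aM bM.
have h := key b a bS bM aM.
by rewrite [e a b]e_sym h t.
Qed.

Lemma single_module S x : x \in S -> is_module e S [set x].
Proof.
move=> xS; rewrite /is_module sub1set xS /=; apply/forall_inP => v _.
case ev: (e v x); apply/orP; [left|right]; apply/forall_inP => m;
  by rewrite inE => /eqP ->; rewrite ev.
Qed.

Lemma prime_cover S x : node_kind e S = Prime -> x \in S ->
  exists2 M, M \in children e S & x \in M.
Proof.
move=> kp xS; have [n1 _ _] := kind_prime kp.
pose P := fun M : {set T} => [&& is_module e S M, x \in M & M != S].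
have Px : P [set x].
  rewrite /P single_module // set11 /=.
  by apply/eqP => E; move: n1; rewrite -E cards1.
case: (@arg_maxnP _ [set x] P (fun M => #|M|) Px) => M /and3P[mM xM nMS] Hmax.
exists M => //; rewrite ch_kind kp inE; apply/and3P; split => //.
apply/forallP => M'; apply/implyP => /andP[mM' pr]; apply/negPn/negP => nM'.
have := Hmax M'; rewrite /P mM' nM' (subsetP (proper_sub pr) x xM) /=.
by move=> /(_ isT); rewrite leqNgt (proper_card pr).
Qed.

Lemma ch_sub S D : D \in children e S -> D \subset S.
Proof.
rewrite ch_kind; case: (node_kind e S).
- by rewrite inE.
- exact: comp_sub.
- exact: comp_sub.
- by rewrite inE => /and3P[/andP[]].
Qed.

Lemma ch_disj S D1 D2 x : D1 \in children e S -> D2 \in children e S ->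
  x \in D1 -> x \in D2 -> D1 = D2.
Proof.
rewrite !ch_kind; case k: (node_kind e S).
- by rewrite inE.
- by move=> h1 h2; apply: comp_disj e_sym h1 h2.
- by move=> h1 h2; apply: comp_disj coe_sym h1 h2.
- by rewrite !inE => h1 h2; apply: prime_disj k h1 h2.
Qed.

Lemma ch_nonempty S D : D \in children e S -> exists x, x \in D.
Proof.
rewrite ch_kind; case k: (node_kind e S).
- by rewrite inE.
- by case/comp_mem => c cS ->; exists c; rewrite inE cS connect0.
- by case/comp_mem => c cS ->; exists c; rewrite inE cS connect0.
rewrite inE => p; case: (set_0Vmem D) => [D0|[x xD]]; last by exists x.
exfalso; subst D; have [n1 _ _] := kind_prime k.
case/and3P: (p) => /andP[sS _] nS _.
case: (set_0Vmem S) => [S0|[y yS]]; first by rewrite S0 eqxx in nS.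
have := max_pm p (single_module yS); rewrite proper0 => E.
have : [set y] = S by apply: E; apply/set0Pn; exists y; rewrite set11.
by move=> E'; move: n1; rewrite -E' cards1.
Qed.


Definition Phi (N M : {set T}) := [\/ M = N, exists2 D, D \in children e N & M \subset D,
  exists2 D, D \in children e M & N \subset D | forall x, x \in M -> x \in N -> False].

Definition Hprop (N : {set T}) := forall M, is_node e M -> N \subset M ->
  N = M \/ exists2 D, D \in children e M & N \subset D.

Lemma inner (N : {set T}) : Hprop N -> forall M, is_node e M -> Phi N M.
Proof.
move=> HN M hM; elim: hM => [|P M0 hP IHP MP].
  case: (HN _ (@node_root T e) (subsetT N)) => [E|[D hD sD]].
    by apply: Or41; rewrite E.
  by apply: Or43; exists D.
case: IHP => [E | [D hD sD] | [D hD sD] | dis].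
- by subst P; apply: Or42; exists M0.
- by apply: Or42; exists D => //; apply: subset_trans (ch_sub MP) sD.
- case: (eqVneq D M0) => [DM|DM].
    subst D; case: (HN M0 (node_child hP MP) sD) => [E|[D' hD' sD']].
      by apply: Or41.
    by apply: Or43; exists D'.
  apply: Or44 => x xM xN; have xD := subsetP sD x xN.
  by have := ch_disj MP hD xM xD => E; rewrite E eqxx in DM.
- by apply: Or44 => x xM xN; apply: (dis x) => //; apply: (subsetP (ch_sub MP)).
Qed.

Lemma Phi_all (N : {set T}) : is_node e N -> forall M, is_node e M -> Phi N M.
Proof.
elim => [|Q N' hQ IHQ NQ].
  apply: inner => M hM sM; left; apply/eqP.
  by rewrite eqEsubset sM subsetT.
apply: inner => M hM sM.
case: (IHQ M hM) => [E | [D hD sD] | [D hD sD] | dis].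
- by subst M; right; exists N'.
- have [x xN] := ch_nonempty NQ.
  have xD := subsetP sD x (subsetP sM x xN).
  have ED := ch_disj NQ hD xN xD; subst D.
  by left; apply/eqP; rewrite eqEsubset sM sD.
- by right; exists D => //; apply: subset_trans (ch_sub NQ) sD.
- have [x xN] := ch_nonempty NQ; exfalso; apply: (dis x).
    exact: (subsetP sM).
  exact: (subsetP (ch_sub NQ)).
Qed.

Lemma uniq3 (U : eqType) (a b c : U) : uniq [:: a; b; c] ->
  [/\ a != b, a != c & b != c].
Proof. by rewrite /= !inE negb_or andbT => /andP[/andP[-> ->] ->]. Qed.

Lemma excl x0 x1 x2 x3 : way1 e x0 x1 x2 x3 -> way2 e x0 x1 x2 x3 -> False.
Proof.
case=> A1 [X0 [X1 [X2 [X3 [hA1 kA1 [h0 h1 h2 h3] cl [i0 i1 i2 i3]]]]]].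
case=> B [A [C [Y1 [Y2 [Y3 [[hB kB AB kA] [g1 g2 g3] ind [j1 j2 j3] [CB CA x0C]]]]]]].
case/and5P: cl => q01 _ _ _ /and3P[_ _ /uniq3[n12 _ _]].
have x0A1 := subsetP (ch_sub h0) _ i0.
have x1A := subsetP (ch_sub g1) _ j1.
have x2A := subsetP (ch_sub g2) _ j2.
have x0B := subsetP (ch_sub CB) _ x0C.
have x1B := subsetP (ch_sub AB) _ x1A.
have x2B := subsetP (ch_sub AB) _ x2A.
case: (Phi_all hA1 hB) => [E | [D hD sD] | [D hD sD] | dis].
- by rewrite E kA1 in kB.
- have E1 := ch_disj h1 hD i1 (subsetP sD _ x1B).
  have E2 := ch_disj h2 hD i2 (subsetP sD _ x2B).
  by rewrite E1 E2 eqxx in n12.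
- have E := ch_disj hD CB (subsetP sD _ x0A1) x0C; subst D.
  have x1A1 := subsetP (ch_sub h1) _ i1.
  have E' := ch_disj CB AB (subsetP sD _ x1A1) x1A.
  by rewrite E' eqxx in CA.
- exact: (dis x0).
Qed.


Lemma qadjE A X Y x y : node_kind e A = Prime -> X \in children e A ->
  Y \in children e A -> X != Y -> x \in X -> y \in Y -> qadj e X Y = e x y.
Proof.
move=> kA hX hY nXY xX yY.
have pX : max_proper_module e A X by move: hX; rewrite ch_kind kA inE.
have pY : max_proper_module e A Y by move: hY; rewrite ch_kind kA inE.
have mX : is_module e A X by case/and3P: pX.
have mY : is_module e A Y by case/and3P: pY.
have yA := subsetP (ch_sub hY) _ yY.
have yX : y \notin X.
  by apply/negP => yX; rewrite (ch_disj hX hY yX yY) eqxx in nXY.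
rewrite /qadj nXY /=; apply/idP/idP.
  by move/forall_inP/(_ x xX)/forall_inP/(_ y yY).
move=> exy; apply/forall_inP => a aX; apply/forall_inP => b bY.
have aA := subsetP (ch_sub hX) _ aX.
have aY : a \notin Y.
  by apply/negP => aY; rewrite (ch_disj hX hY aX aY) eqxx in nXY.
rewrite (mod_uniform mY aA aY bY yY) e_sym (mod_uniform mX yA yX aX xX).
by rewrite e_sym exy.
Qed.

Definition clique (D : {set T}) := forall x y, x \in D -> y \in D -> x != y -> e x y.

Lemma los_clique D : leaf_or_serial e D -> clique D.
Proof.
case=> [k | [k hch]] x y xD yD nxy.
  have /cards1P [z Dz] : #|D| == 1 by rewrite (kind_single k).
  by move: xD yD nxy; rewrite Dz !inE => /eqP -> /eqP ->; rewrite eqxx.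
case: (@comp_cover (coe e) D x xD) => Cx hCx xCx.
case: (@comp_cover (coe e) D y yD) => Cy hCy yCy.
case: (eqVneq Cx Cy) => [E | ne]; last exact: serial_adj hCx hCy ne xCx yCy.
subst Cy; have : Cx \in children e D by rewrite ch_kind k.
move/hch => k1.
have /cards1P [z Cz] : #|Cx| == 1 by rewrite (kind_single k1).
by move: xCx yCy nxy; rewrite Cz !inE => /eqP -> /eqP ->; rewrite eqxx.
Qed.

Lemma par_no_indep C x1 x2 x3 : node_kind e C = Parallel ->
  #|children e C| = 2 -> (forall D, D \in children e C -> leaf_or_serial e D) ->
  x1 \in C -> x2 \in C -> x3 \in C -> ~~ e x1 x2 -> ~~ e x1 x3 -> ~~ e x2 x3 ->
  x1 != x2 -> x1 != x3 -> x2 != x3 -> False.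
Proof.
move=> k c2 hD x1C x2C x3C n12 n13 n23 d12 d13 d23.
have cov : forall x, x \in C -> exists2 K, K \in children e C & x \in K.
  by move=> x xC; rewrite ch_kind k; apply: comp_cover.
case: (cov x1 x1C) => K1 h1 i1.
case: (cov x2 x2C) => K2 h2 i2.
case: (cov x3 x3C) => K3 h3 i3.
have n12K : K1 != K2.
  by apply/eqP => E; subst K2; move: n12; rewrite (los_clique (hD K1 h1) i1 i2 d12).
have n13K : K1 != K3.
  by apply/eqP => E; subst K3; move: n13; rewrite (los_clique (hD K1 h1) i1 i3 d13).
have n23K : K2 != K3.
  by apply/eqP => E; subst K3; move: n23; rewrite (los_clique (hD K2 h2) i2 i3 d23).
have : #|[set K1; K2; K3]| <= #|children e C|.
  apply: subset_leq_card; apply/subsetP => K; rewrite !inE -!orbA.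
  by case/or3P => /eqP ->.
rewrite c2 setUC cardsU1 cards2 !inE negb_or n12K.
by rewrite eq_sym n13K eq_sym n23K.
Qed.

Lemma prime_sep A X Y x y : node_kind e A = Prime ->
  (forall D, D \in children e A -> leaf_or_serial e D) ->
  X \in children e A -> Y \in children e A -> x \in X -> y \in Y -> x != y ->
  ~~ e x y -> X != Y /\ ~~ qadj e X Y.
Proof.
move=> k hD hX hY xX yY nxy nexy.
have nXY : X != Y.
  by apply/eqP => E; subst Y; move: nexy; rewrite (los_clique (hD X hX) xX yY nxy).
by split => //; rewrite (qadjE k hX hY nXY xX yY).
Qed.

Lemma same_mod A X a b c : node_kind e A = Prime -> X \in children e A ->
  a \in X -> b \in X -> c \in A -> c \notin X -> e a c = e b c.
Proof.
move=> k hX aX bX cA cX.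
have m : is_module e A X by move: hX; rewrite ch_kind k inE => /and3P[].
by rewrite e_sym [e b c]e_sym; apply: mod_uniform m cA cX aX bX.
Qed.

Lemma distinct_elems S X Y x y : X \in children e S -> Y \in children e S ->
  X != Y -> x \in X -> y \in Y -> x != y.
Proof.
move=> hX hY nXY xX yY; apply/eqP => E; subst y.
by rewrite (ch_disj hX hY xX yY) eqxx in nXY.
Qed.

Lemma prime_claw A x0 x1 x2 x3 : is_node e A -> node_kind e A = Prime ->
  (forall D, D \in children e A -> leaf_or_serial e D) ->
  clawb e x0 x1 x2 x3 -> x0 \in A -> x1 \in A -> x2 \in A -> x3 \in A ->
  way1 e x0 x1 x2 x3.
Proof.
move=> hA k hD cl a0 a1 a2 a3.
move: (cl) => /and5P[e01 e02 e03 n12 /and3P[n13 n23 /uniq3[d12 d13 d23]]].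
case: (prime_cover k a0) => X0 h0 i0.
case: (prime_cover k a1) => X1 h1 i1.
case: (prime_cover k a2) => X2 h2 i2.
case: (prime_cover k a3) => X3 h3 i3.
have [s12 q12] := prime_sep k hD h1 h2 i1 i2 d12 n12.
have [s13 q13] := prime_sep k hD h1 h3 i1 i3 d13 n13.
have [s23 q23] := prime_sep k hD h2 h3 i2 i3 d23 n23.
have n01 : X0 != X1.
  apply/eqP => E; rewrite -E in i1 s12.
  have x2n : x2 \notin X0.
    by apply/negP => x2X0; rewrite (ch_disj h0 h2 x2X0 i2) eqxx in s12.
  have := same_mod k h0 i0 i1 a2 x2n.
  by rewrite e02 (negbTE n12).
have n02 : X0 != X2.
  apply/eqP => E; rewrite -E in i2 s12.
  have x1n : x1 \notin X0.
    by apply/negP => x1X0; rewrite (ch_disj h1 h0 i1 x1X0) eqxx in s12.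
  have := same_mod k h0 i0 i2 a1 x1n.
  by rewrite e01 [e x2 x1]e_sym (negbTE n12).
have n03 : X0 != X3.
  apply/eqP => E; rewrite -E in i3 s13.
  have x1n : x1 \notin X0.
    by apply/negP => x1X0; rewrite (ch_disj h1 h0 i1 x1X0) eqxx in s13.
  have := same_mod k h0 i0 i3 a1 x1n.
  by rewrite e01 [e x3 x1]e_sym (negbTE n13).
exists A, X0, X1, X2, X3; split => //.
rewrite /clawb (qadjE k h0 h1 n01 i0 i1) (qadjE k h0 h2 n02 i0 i2).
rewrite (qadjE k h0 h3 n03 i0 i3) q12 q13 q23 e01 e02 e03 /=.
by rewrite !inE negb_or s12 s13 s23.
Qed.

Lemma part1 A X0 X1 X2 X3 x0 x1 x2 x3 : node_kind e A = Prime ->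
  X0 \in children e A -> X1 \in children e A ->
  X2 \in children e A -> X3 \in children e A ->
  clawb (qadj e) X0 X1 X2 X3 ->
  x0 \in X0 -> x1 \in X1 -> x2 \in X2 -> x3 \in X3 -> clawb e x0 x1 x2 x3.
Proof.
move=> k h0 h1 h2 h3 cl i0 i1 i2 i3.
case/and5P: cl => q01 q02 q03 nq12 /and3P[nq13 nq23 /uniq3[s12 s13 s23]].
have n01 : X0 != X1 by case/andP: q01.
have n02 : X0 != X2 by case/andP: q02.
have n03 : X0 != X3 by case/andP: q03.
rewrite (qadjE k h0 h1 n01 i0 i1) in q01.
rewrite (qadjE k h0 h2 n02 i0 i2) in q02.
rewrite (qadjE k h0 h3 n03 i0 i3) in q03.
rewrite (qadjE k h1 h2 s12 i1 i2) in nq12.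
rewrite (qadjE k h1 h3 s13 i1 i3) in nq13.
rewrite (qadjE k h2 h3 s23 i2 i3) in nq23.
rewrite /clawb q01 q02 q03 nq12 nq13 nq23 /= !inE negb_or.
by rewrite (distinct_elems h1 h2 s12 i1 i2) (distinct_elems h1 h3 s13 i1 i3)
  (distinct_elems h2 h3 s23 i2 i3).
Qed.

Lemma part2 B A X1 X2 X3 x1 x2 x3 C x0 : node_kind e B = Serial ->
  A \in children e B -> node_kind e A = Prime ->
  X1 \in children e A -> X2 \in children e A -> X3 \in children e A ->
  [&& ~~ qadj e X1 X2, ~~ qadj e X1 X3, ~~ qadj e X2 X3 & uniq [:: X1; X2; X3]] ->
  x1 \in X1 -> x2 \in X2 -> x3 \in X3 ->
  C \in children e B -> C != A -> x0 \in C -> clawb e x0 x1 x2 x3.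
Proof.
move=> kB AB k h1 h2 h3 ind i1 i2 i3 CB CA x0C.
case/and4P: ind => nq12 nq13 nq23 /uniq3[s12 s13 s23].
rewrite (qadjE k h1 h2 s12 i1 i2) in nq12.
rewrite (qadjE k h1 h3 s13 i1 i3) in nq13.
rewrite (qadjE k h2 h3 s23 i2 i3) in nq23.
have hC : C \in components (coe e) B by move: CB; rewrite ch_kind kB.
have hA : A \in components (coe e) B by move: AB; rewrite ch_kind kB.
have a1 := subsetP (ch_sub h1) _ i1.
have a2 := subsetP (ch_sub h2) _ i2.
have a3 := subsetP (ch_sub h3) _ i3.
rewrite /clawb (serial_adj hC hA CA x0C a1) (serial_adj hC hA CA x0C a2).
rewrite (serial_adj hC hA CA x0C a3) nq12 nq13 nq23 /= !inE negb_or.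
by rewrite (distinct_elems h1 h2 s12 i1 i2) (distinct_elems h1 h3 s13 i1 i3)
  (distinct_elems h2 h3 s23 i2 i3).
Qed.

Lemma formb_claw B x0 x1 x2 x3 : is_node e B -> form_b e B ->
  clawb e x0 x1 x2 x3 -> x0 \in B -> x1 \in B -> x2 \in B -> x3 \in B ->
  way1 e x0 x1 x2 x3 \/ way2 e x0 x1 x2 x3.
Proof.
move=> hB [kB hC] cl b0 b1 b2 b3.
move: (cl) => /and5P[e01 e02 e03 n12 /and3P[n13 n23 /uniq3[d12 d13 d23]]].
have chB : children e B = components (coe e) B by rewrite ch_kind kB.
case: (@comp_cover (coe e) B x1 b1) => C hCc x1C.
have hCB : C \in children e B by rewrite chB.
have x2C : x2 \in C.
  by apply: (comp_same hCc x1C b2); apply: connect1; rewrite /rs b1 b2 /coe d12 n12.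
have x3C : x3 \in C.
  by apply: (comp_same hCc x1C b3); apply: connect1; rewrite /rs b1 b3 /coe d13 n13.
case: (hC C hCB) => [kC | [[kC [c2 hD]] | [kC hD]]].
- have /cards1P[z Cz] : #|C| == 1 by rewrite kind_single.
  by move: x1C x2C d12; rewrite Cz !inE => /eqP -> /eqP ->; rewrite eqxx.
- by exfalso; apply: (par_no_indep kC c2 hD x1C x2C x3C n12 n13 n23 d12 d13 d23).
case: (boolP (x0 \in C)) => x0C.
  by left; apply: (prime_claw (node_child hB hCB) kC hD cl x0C x1C x2C x3C).
right.
case: (@comp_cover (coe e) B x0 b0) => C0 hC0c x0C0.
have C0B : C0 \in children e B by rewrite chB.
have nC0 : C0 != C by apply/eqP => E; rewrite -E x0C0 in x0C.
case: (prime_cover kC x1C) => X1 h1 i1.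
case: (prime_cover kC x2C) => X2 h2 i2.
case: (prime_cover kC x3C) => X3 h3 i3.
have [s12 q12] := prime_sep kC hD h1 h2 i1 i2 d12 n12.
have [s13 q13] := prime_sep kC hD h1 h3 i1 i3 d13 n13.
have [s23 q23] := prime_sep kC hD h2 h3 i2 i3 d23 n23.
exists B, C, C0, X1, X2, X3; split => //.
by rewrite q12 q13 q23 /= !inE negb_or s12 s13 s23.
Qed.

Lemma exists_way x0 x1 x2 x3 :
  form_a e [set: T] \/ form_b e [set: T] \/ form_c e [set: T] ->
  clawb e x0 x1 x2 x3 -> way1 e x0 x1 x2 x3 \/ way2 e x0 x1 x2 x3.
Proof.
move=> shape cl.
case: shape => [[k hD] | [fb | [kP hC]]].
- by left; apply: (prime_claw (@node_root T e) k hD cl); rewrite in_setT.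
- by apply: (formb_claw (@node_root T e) fb cl); rewrite in_setT.
move: (cl) => /and5P[e01 e02 e03 n12 /and3P[n13 n23 _]].
have chR : children e [set: T] = components e [set: T] by rewrite ch_kind kP.
case: (@comp_cover e [set: T] x0 (in_setT x0)) => K hKc x0K.
have hKR : K \in children e [set: T] by rewrite chR.
have inK : forall y, e x0 y -> y \in K.
  move=> y exy; apply: (comp_same hKc x0K (in_setT y)); apply: connect1.
  by rewrite /rs !in_setT exy.
have x1K := inK _ e01; have x2K := inK _ e02; have x3K := inK _ e03.
have hK := node_child (@node_root T e) hKR.
case: (hC K hKR) => [kK | [[k hD] | fb]].
- have d01 : x0 != x1 by apply/eqP => E; subst x1; rewrite e_irr in e01.
  have /cards1P[z Kz] : #|K| == 1 by rewrite kind_single.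
  by move: x0K x1K d01; rewrite Kz !inE => /eqP -> /eqP ->; rewrite eqxx.
- by left; apply: (prime_claw hK k hD cl x0K x1K x2K x3K).
- exact: (formb_claw hK fb cl x0K x1K x2K x3K).
Qed.

End Proof.

Theorem proposition5 (T : finType) (e : rel T)
  (e_sym : symmetric e) (e_irr : irreflexive e) (T_nonempty : 0 < #|T|)
  (shape : form_a e [set: T] \/ form_b e [set: T] \/ form_c e [set: T]) :
  (* (1) *)
  (forall A : {set T}, is_node e A -> node_kind e A = Prime ->
     forall X0 X1 X2 X3 : {set T},
       X0 \in children e A -> X1 \in children e A ->
       X2 \in children e A -> X3 \in children e A ->
       clawb (qadj e) X0 X1 X2 X3 ->
       forall x0 x1 x2 x3 : T, x0 \in X0 -> x1 \in X1 -> x2 \in X2 -> x3 \in X3 ->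
         clawb e x0 x1 x2 x3) /\
  (* (2) *)
  (forall B A : {set T}, is_node e B -> node_kind e B = Serial ->
     A \in children e B -> node_kind e A = Prime ->
     forall X1 X2 X3 : {set T},
       X1 \in children e A -> X2 \in children e A -> X3 \in children e A ->
       [&& ~~ qadj e X1 X2, ~~ qadj e X1 X3, ~~ qadj e X2 X3 & uniq [:: X1; X2; X3]] ->
       forall x1 x2 x3 : T, x1 \in X1 -> x2 \in X2 -> x3 \in X3 ->
       forall C : {set T}, C \in children e B -> C != A ->
       forall x0 : T, x0 \in C -> clawb e x0 x1 x2 x3) /\
  (* every claw arises in exactly one of the ways (1), (2) *)
  (forall x0 x1 x2 x3 : T, clawb e x0 x1 x2 x3 ->
     (way1 e x0 x1 x2 x3 /\ ~ way2 e x0 x1 x2 x3) \/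
     (way2 e x0 x1 x2 x3 /\ ~ way1 e x0 x1 x2 x3)).
Proof.
split.
  move=> A _ k X0 X1 X2 X3 h0 h1 h2 h3 cl x0 x1 x2 x3 i0 i1 i2 i3.
  exact: (part1 e_sym k h0 h1 h2 h3 cl i0 i1 i2 i3).
split.
  move=> B A _ kB AB kA X1 X2 X3 h1 h2 h3 ind x1 x2 x3 i1 i2 i3 C CB CA x0 x0C.
  exact: (part2 e_sym kB AB kA h1 h2 h3 ind i1 i2 i3 CB CA x0C).
move=> x0 x1 x2 x3 cl.
case: (exists_way e_sym e_irr shape cl) => [w1|w2].
  by left; split => // w2; apply: (excl e_sym w1 w2).
by right; split => // w1; apply: (excl e_sym w1 w2).
Qed.
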